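(* Let $G$ be a simple undirected graph with vertices $v_1,\dots,v_n$ and let $G^d$ be a digraph whose underlying undirected graph is $G$ (an orientation of each edge of $G$), with edges $e_1,\dots,e_m$. Then the ideal $I(E)_{G^d}$ is generated by the binomials $f_C$, where $C$ ranges over the cycles of $G$.
   Context: $K$ is a field of characteristic zero; $[v_i,v_j]$ is the directed edge from $v_i$ to $v_j$. $I(E)_{G^d}=I(G^d,E)\cap K[e_1,\dots,e_m]$, where $I(G^d,E)\subseteq K[e_1,\dots,e_m,v_1,\dots,v_n,z_1,\dots,z_n]$ is generated by $e_h-z_iv_j$ for each edge $e_h=[v_i,v_j]$ of $G^d$ and $z_iv_i-1$, $i=1,\dots,n$. For a cycle $C$ of $G$ with vertices $v_{i(1)},\dots,v_{i(q)}$ (distinct) and edges $e_{h_1},\dots,e_{h_q}$, $e_{h_k}$ joining $v_{i(k)}$ and $v_{i(k+1)}$ ($v_{i(q+1)}=v_{i(1)}$), let $I$ be the set of $h_k$ with $e_{h_k}=[v_{i(k)},v_{i(k+1)}]$ in $G^d$ and $J$ the remaining indices; $f_C=\prod_{h\in I}e_h-\prod_{h\in J}e_h$ (empty product $=1$). *)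

(* Defs.v *)
From mathcomp Require Import all_boot all_order all_algebra.
From mathcomp Require Import mpoly.
Set Implicit Arguments. Unset Strict Implicit. Unset Printing Implicit Defensive.
Import GRing.Theory.
Local Open Scope ring_scope.

Definition in_ideal_gen (R : comRingType) (S : R -> Prop) (p : R) : Prop :=
  exists (k : nat) (a g : 'I_k -> R),
    (forall i, S (g i)) /\ p = \sum_(i < k) a i * g i.

(* A digraph G^d on vertices 'I_n with edges 'I_m: edge h is [v_(src h), v_(tgt h)]. *)
Definition simple_orientation (n m : nat) (src tgt : 'I_m -> 'I_n) : Prop :=
  (forall h, src h != tgt h) /\
  (forall h h', [set src h; tgt h] = [set src h'; tgt h'] -> h = h').

(* Variables of K[e_1..e_m, v_1..v_n, z_1..z_n], indexed by 'I_(m + (n + n)). *)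
Section Vars.
Context (K : fieldType) (n m : nat).
Definition NV := (m + (n + n))%N.
Definition evar (h : 'I_m) : {mpoly K[NV]} := 'X_(lshift (n + n) h).
Definition vvar (i : 'I_n) : {mpoly K[NV]} := 'X_(rshift m (lshift n i)).
Definition zvar (i : 'I_n) : {mpoly K[NV]} := 'X_(rshift m (rshift n i)).

Definition IGdE_gen (src tgt : 'I_m -> 'I_n) (f : {mpoly K[NV]}) : Prop :=
  (exists h, f = evar h - zvar (src h) * vvar (tgt h)) \/
  (exists i, f = zvar i * vvar i - 1).

Definition embedE (p : {mpoly K[m]}) : {mpoly K[NV]} :=
  mmap (fun c => c%:MP) evar p.

(* Membership in I(E)_{G^d} = I(G^d,E) ∩ K[e_1..e_m]. *)
Definition in_IE (src tgt : 'I_m -> 'I_n) (p : {mpoly K[m]}) : Prop :=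
  in_ideal_gen (IGdE_gen src tgt) (embedE p).

Definition is_cycle (src tgt : 'I_m -> 'I_n) (vs : seq 'I_n) (hs : seq 'I_m) : Prop :=
  [/\ (3 <= size vs)%N, size hs = size vs, uniq vs, uniq hs &
    forall k, (k < size vs)%N ->
      forall (h : 'I_m) (a b : 'I_n),
        nth h hs k = h -> nth a vs k = a -> nth a vs ((k.+1) %% size vs) = b ->
        [set src h; tgt h] = [set a; b]].

Definition fC (src tgt : 'I_m -> 'I_n) (vs : seq 'I_n) (hs : seq 'I_m) (h0 : 'I_m) (a0 : 'I_n)
  : {mpoly K[m]} :=
  let fwd k := (src (nth h0 hs k) == nth a0 vs k) &&
               (tgt (nth h0 hs k) == nth a0 vs ((k.+1) %% size vs)) in
  \prod_(k < size hs | fwd k) 'X_(nth h0 hs k)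
  - \prod_(k < size hs | ~~ fwd k) 'X_(nth h0 hs k).

Definition cycle_binomial (src tgt : 'I_m -> 'I_n) (f : {mpoly K[m]}) : Prop :=
  exists vs hs (h0 : 'I_m) (a0 : 'I_n), is_cycle src tgt vs hs /\ f = fC src tgt vs hs h0 a0.
End Vars.

(* Main.v *)
Require Import Defs.
From mathcomp Require Import all_boot all_order all_algebra.
From mathcomp Require Import mpoly.
From mathcomp Require Import ring zify.
Set Implicit Arguments. Unset Strict Implicit. Unset Printing Implicit Defensive.
Import GRing.Theory.
Local Open Scope ring_scope.


Section Ideal.
Variables (R : comRingType) (S : R -> Prop).
Local Notation I := (in_ideal_gen S).

Lemma ideal0 : I 0.
Proof. by exists 0%N, (fun=> 0), (fun=> 0); split; [case|rewrite big_ord0]. Qed.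

Lemma idealG g : S g -> I g.
Proof.
move=> Sg; exists 1%N, (fun=> 1), (fun=> g); split => //.
by rewrite big_ord1 mul1r.
Qed.

Lemma idealD p q : I p -> I q -> I (p + q).
Proof.
move=> [k1 [a1 [g1 [S1 ->]]]] [k2 [a2 [g2 [S2 ->]]]].
exists (k1 + k2)%N, (fun i => match split i with inl j => a1 j | inr j => a2 j end),
  (fun i => match split i with inl j => g1 j | inr j => g2 j end); split.
  by move=> i; case: (split i).
rewrite big_split_ord /=; congr (_ + _); apply: eq_bigr => j _.
  by have := unsplitK (inl _ j) => /= ->.
by have := unsplitK (inr _ j) => /= ->.
Qed.

Lemma idealM r p : I p -> I (r * p).
Proof.
move=> [k [a [g [Sg ->]]]]; exists k, (fun i => r * a i), g; split => //.
by rewrite mulr_sumr; apply: eq_bigr => i _; rewrite mulrA.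
Qed.

Lemma idealN p : I p -> I (- p).
Proof. by move=> Ip; rewrite -mulN1r; apply: idealM. Qed.

Lemma idealB p q : I p -> I q -> I (p - q).
Proof. by move=> Ip Iq; apply: idealD => //; apply: idealN. Qed.

Lemma ideal_sum (T : Type) (r : seq T) (P : pred T) (F : T -> R) :
  (forall i, P i -> I (F i)) -> I (\sum_(i <- r | P i) F i).
Proof.
move=> H; elim/big_rec: _ => [|i x Pi Ix]; first exact: ideal0.
by apply: idealD => //; apply: H.
Qed.

Definition cong p q := I (p - q).
Lemma cong_refl p : cong p p.
Proof. by rewrite /cong subrr; apply: ideal0. Qed.
Lemma cong_sym p q : cong p q -> cong q p.
Proof. by rewrite /cong => /idealN; rewrite opprB. Qed.
Lemma cong_trans p q r : cong p q -> cong q r -> cong p r.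
Proof.
by rewrite /cong => H1 H2; have := idealD H1 H2; rewrite addrA subrK.
Qed.
Lemma congM p1 q1 p2 q2 : cong p1 q1 -> cong p2 q2 -> cong (p1 * p2) (q1 * q2).
Proof.
rewrite /cong => H1 H2.
have -> : p1 * p2 - q1 * q2 = p2 * (p1 - q1) + q1 * (p2 - q2).
  by rewrite !mulrBr [p2 * p1]mulrC [q1 * q2]mulrC [p2 * q1]mulrC addrA subrK.
by apply: idealD; apply: idealM.
Qed.
Lemma cong_prod (T : Type) (r : seq T) (P : pred T) (F G : T -> R) :
  (forall i, P i -> cong (F i) (G i)) ->
  cong (\prod_(i <- r | P i) F i) (\prod_(i <- r | P i) G i).
Proof.
move=> H; elim/big_rec2: _ => [|i x y Pi Hxy]; first exact: cong_refl.
by apply: congM => //; apply: H.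
Qed.
End Ideal.


Section Dir1.
Variables (K : fieldType) (n m : nat) (src tgt : 'I_m -> 'I_n).
Local Notation IG := (@IGdE_gen K n m src tgt).
Local Notation embedE := (@embedE K n m).
Local Notation evar := (@evar K n m).
Local Notation vvar := (@vvar K n m).
Local Notation zvar := (@zvar K n m).

Lemma embedE_rm : embedE = mmap (@mpolyC _ K) evar.
Proof. by []. Qed.

Lemma embedEM p q : embedE (p * q) = embedE p * embedE q.
Proof. by rewrite embedE_rm rmorphM. Qed.
Lemma embedED p q : embedE (p + q) = embedE p + embedE q.
Proof. by rewrite embedE_rm rmorphD. Qed.
Lemma embedEB p q : embedE (p - q) = embedE p - embedE q.
Proof. by rewrite embedE_rm rmorphB. Qed.
Lemma embedE_prod (T : Type) (r : seq T) (P : pred T) (F : T -> {mpoly K[m]}) :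
  embedE (\prod_(i <- r | P i) F i) = \prod_(i <- r | P i) embedE (F i).
Proof. by rewrite embedE_rm rmorph_prod. Qed.
Lemma embedE_sum (T : Type) (r : seq T) (P : pred T) (F : T -> {mpoly K[m]}) :
  embedE (\sum_(i <- r | P i) F i) = \sum_(i <- r | P i) embedE (F i).
Proof. by rewrite embedE_rm rmorph_sum. Qed.
Lemma embedEX h : embedE 'X_h = evar h.
Proof. by rewrite embedE_rm mmapX mmap1U. Qed.

Lemma pair_swap (x y a b : 'I_n) :
  [set x; y] = [set a; b] -> ~~ ((x == a) && (y == b)) -> x = b /\ y = a.
Proof.
move=> E nab.
have xin : x \in [set a; b] by rewrite -E !inE eqxx.
have yin : y \in [set a; b] by rewrite -E !inE eqxx orbT.
have ain : a \in [set x; y] by rewrite E !inE eqxx.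
have bin : b \in [set x; y] by rewrite E !inE eqxx orbT.
move: xin yin ain bin nab; rewrite !inE.
by do 4 (case/orP=> /eqP ?; subst) => //=; rewrite ?eqxx //=.
Qed.

Lemma dir1 vs hs h0 a0 : is_cycle src tgt vs hs ->
  in_ideal_gen IG (embedE (fC K src tgt vs hs h0 a0)).
Proof.
case=> _ Hsz _ _ Hadj.
rewrite /fC embedEB !embedE_prod Hsz.
set L := size vs.
pose fwd := fun k : 'I_L => (src (nth h0 hs k) == nth a0 vs k) && (tgt (nth h0 hs k) == nth a0 vs (k.+1 %% L)).
set H := fun k : 'I_L => nth h0 hs k.
set V := fun k : 'I_L => nth a0 vs k.
have VS : forall k : 'I_L, nth a0 vs (k.+1 %% L) = V (ordS k) by [].
pose X k := zvar (V k) * vvar (V (ordS k)).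
pose Y k := zvar (V (ordS k)) * vvar (V k).
have gen1 : forall i, cong IG (zvar i * vvar i) 1.
  by move=> i; apply: idealG; right; exists i.
have adj : forall k : 'I_L, [set src (H k); tgt (H k)] = [set V k; V (ordS k)].
  move=> k; have kL := ltn_ord k.
  have L0 : (0 < L)%N by apply: leq_ltn_trans kL.
  apply: (Hadj k kL).
  - by rewrite /H; apply: set_nth_default; rewrite Hsz.
  - by rewrite /V; apply: set_nth_default.
  - by rewrite -VS; apply: set_nth_default; rewrite ltn_pmod.
have eX : forall k, fwd k -> cong IG (evar (H k)) (X k).
  move=> k0 /andP [/eqP s /eqP t]; apply: idealG; left; exists (H k0).
  by rewrite /H s t VS.
have eY : forall k, ~~ fwd k -> cong IG (evar (H k)) (Y k).
  move=> k0 nf.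
  have nf' : ~~ ((src (H k0) == V k0) && (tgt (H k0) == V (ordS k0))) by rewrite -VS.
  have [s t] := pair_swap (adj k0) nf'.
  by apply: idealG; left; exists (H k0); rewrite /Y s t.
have S1 : cong IG (\prod_(k < L | fwd k) evar (nth h0 hs k)) (\prod_(k < L | fwd k) X k).
  by apply: cong_prod.
have S2 : cong IG (\prod_(k < L | ~~ fwd k) evar (nth h0 hs k)) (\prod_(k < L | ~~ fwd k) Y k).
  by apply: cong_prod.
under eq_bigr do rewrite embedEX.
under [X in _ - X]eq_bigr do rewrite embedEX.
suff: cong IG (\prod_(k < L | fwd k) evar (nth h0 hs k)) (\prod_(k < L | ~~ fwd k) evar (nth h0 hs k)) by [].
apply: cong_trans S1 _; apply: cong_trans _ (cong_sym S2).
have XY1 : cong IG (\prod_(k < L | ~~ fwd k) (X k * Y k)) 1.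
  apply: (@cong_trans _ _ _ (\prod_(k < L | ~~ fwd k) 1)); last first.
    by rewrite big1_eq; apply: cong_refl.
  apply: cong_prod => k _.
  have -> : X k * Y k = (zvar (V k) * vvar (V k)) * (zvar (V (ordS k)) * vvar (V (ordS k))).
    by rewrite /X /Y; ring.
  by rewrite -[X in cong _ _ X]mulr1; apply: congM.
have Xall : \prod_(k < L) X k = \prod_(k < L) (zvar (V k) * vvar (V k)).
  rewrite /X !big_split /=; congr (_ * _).
  by rewrite [RHS](reindex_inj (@ordS_inj L)).
have Pall : cong IG (\prod_(k < L) X k) 1.
  rewrite Xall; apply: (@cong_trans _ _ _ (\prod_(k < L) 1)); last first.
    by rewrite big1_eq; apply: cong_refl.
  by apply: cong_prod.
have step : cong IG (\prod_(k < L | fwd k) X k)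
    ((\prod_(k < L | fwd k) X k) * \prod_(k < L | ~~ fwd k) (X k * Y k)).
  by rewrite -[X in cong _ X _]mulr1; apply: congM; [apply: cong_refl | apply: cong_sym].
apply: cong_trans step _.
have XID : \prod_(k < L) X k = \prod_(k < L | fwd k) X k * \prod_(k < L | ~~ fwd k) X k.
  by rewrite (bigID fwd).
rewrite [Z in _ * Z]big_split /= mulrA -XID.
by rewrite -[X in cong _ _ X]mul1r; apply: congM => //; apply: cong_refl.
Qed.
End Dir1.


Section Weight.
Variables (K : fieldType) (n m : nat) (src tgt : 'I_m -> 'I_n).
Local Notation IG := (@IGdE_gen K n m src tgt).
Local Notation embedE := (@embedE K n m).
Local Notation evar := (@evar K n m).
Local Notation vvar := (@vvar K n m).
Local Notation zvar := (@zvar K n m).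
Local Notation NV := (NV n m).

Definition ewt (h : 'I_m) (i : 'I_n) : int := ((tgt h == i) : nat)%:Z - ((src h == i) : nat)%:Z.
Definition wt (a : 'X_{1..m}) (i : 'I_n) : int := \sum_(h < m) (a h)%:Z * ewt h i.
Definition WT (mu : 'X_{1..NV}) (i : 'I_n) : int :=
  \sum_(h < m) (mu (lshift (n+n) h))%:Z * ewt h i
  + (mu (rshift m (lshift n i)))%:Z - (mu (rshift m (rshift n i)))%:Z.

Lemma wtD a b i : wt (a + b) i = wt a i + wt b i.
Proof.
rewrite /wt -big_split /=; apply: eq_bigr => h _.
by rewrite mnmDE PoszD mulrDl.
Qed.

Lemma WTD mu nu i : WT (mu + nu) i = WT mu i + WT nu i.
Proof.
rewrite /WT !mnmDE !PoszD.
rewrite (eq_bigr (fun h => (mu (lshift (n+n) h))%:Z * ewt h i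
    + (nu (lshift (n+n) h))%:Z * ewt h i)); last first.
  by move=> h _; rewrite mnmDE PoszD mulrDl.
rewrite big_split /=; ring.
Qed.

Variable c : 'I_n -> int.
Definition Pc (mu : 'X_{1..NV}) := [forall i, WT mu i == c i].

Definition Lc (q : {mpoly K[NV]}) : K := \sum_(mu <- msupp q | Pc mu) q@_mu.

Lemma Lc_sub (s : seq 'X_{1..NV}) q : uniq s -> {subset msupp q <= s} ->
  \sum_(mu <- s | Pc mu) q@_mu = Lc q.
Proof.
move=> us sub.
rewrite (bigID (mem (msupp q))) /= [X in _ + X]big1 ?addr0; last first.
  by move=> mu /andP [_ H]; apply: memN_msupp_eq0.
rewrite (eq_bigl (fun mu => (mu \in msupp q) && Pc mu)); last first.
  by move=> mu; rewrite andbC.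
rewrite -big_filter_cond /Lc; apply: perm_big; apply: uniq_perm.
- exact: filter_uniq.
- exact: msupp_uniq.
move=> x; rewrite mem_filter; case: (boolP (x \in msupp q)) => //= /sub ->.
by [].
Qed.

Lemma Lc0 : Lc 0 = 0.
Proof. by rewrite /Lc msupp0 big_nil. Qed.

Lemma LcD p q : Lc (p + q) = Lc p + Lc q.
Proof.
set s := undup (msupp p ++ msupp q).
have us : uniq s by apply: undup_uniq.
rewrite -(@Lc_sub s (p + q)) // -?(@Lc_sub s p) // -?(@Lc_sub s q) //.
- by rewrite -big_split /=; apply: eq_bigr => mu _; rewrite mcoeffD.
- by move=> x xq; rewrite mem_undup mem_cat xq orbT.
- by move=> x xp; rewrite mem_undup mem_cat xp.
- by move=> x /msuppD_le; rewrite mem_undup.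
Qed.

Lemma LcZ k q : Lc (k *: q) = k * Lc q.
Proof.
rewrite -(@Lc_sub (msupp q) (k *: q)) ?msupp_uniq //; last exact: msuppZ_le.
by rewrite /Lc mulr_sumr; apply: eq_bigr => mu _; rewrite mcoeffZ.
Qed.

Lemma LcN q : Lc (- q) = - Lc q.
Proof. by rewrite -scaleN1r LcZ mulN1r. Qed.

Lemma LcB p q : Lc (p - q) = Lc p - Lc q.
Proof. by rewrite LcD LcN. Qed.

Lemma Lc_sum (T : Type) (r : seq T) (P : pred T) (F : T -> {mpoly K[NV]}) :
  Lc (\sum_(i <- r | P i) F i) = \sum_(i <- r | P i) Lc (F i).
Proof. by apply: (big_morph Lc LcD Lc0). Qed.

Lemma LcX mu : Lc 'X_[mu] = if Pc mu then 1 else 0.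
Proof.
by rewrite /Lc msuppX big_mkcond big_seq1 mcoeffX eqxx.
Qed.

Lemma Lc_binom q a b : (forall i, WT a i = WT b i) -> Lc (q * ('X_[a] - 'X_[b])) = 0.
Proof.
move=> Hab; rewrite {1}(mpolyE q) mulr_suml Lc_sum big1 // => mu _.
rewrite -scalerAl LcZ mulrBr -!mpolyXD LcB !LcX.
have -> : Pc (mu + a) = Pc (mu + b).
  by rewrite /Pc; apply: eq_forallb => i; rewrite !WTD Hab.
by rewrite subrr mulr0.
Qed.

End Weight.


Section Weight2.
Variables (K : fieldType) (n m : nat) (src tgt : 'I_m -> 'I_n).
Local Notation IG := (@IGdE_gen K n m src tgt).
Local Notation embedE := (@embedE K n m).
Local Notation NV := (NV n m).
Local Notation WT := (WT src tgt).
Local Notation wt := (wt src tgt).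

Lemma delta_sumZ (T : finType) (x0 : T) (F : T -> int) :
  \sum_(x : T) ((x0 == x) : nat)%:Z * F x = F x0.
Proof.
rewrite (bigD1 x0) //= eqxx mul1r big1 ?addr0 // => x nx.
by rewrite eq_sym (negbTE nx) mul0r.
Qed.

Lemma WT_e h0 i : WT U_(lshift (n+n) h0) i = ewt src tgt h0 i.
Proof.
rewrite /WT !mnm1E !eq_lrshift.
rewrite -/(0%N : nat) subr0 addr0.
under eq_bigr do rewrite mnm1E eq_lshift.
by rewrite delta_sumZ.
Qed.

Lemma WT_v t i : WT U_(rshift m (lshift n t)) i = ((t == i) : nat)%:Z.
Proof.
rewrite /WT !mnm1E !eq_rshift eq_lrshift eq_lshift subr0.
rewrite big1 ?add0r // => h _; rewrite mnm1E eq_rlshift mul0r //.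
Qed.

Lemma WT_z s i : WT U_(rshift m (rshift n s)) i = - ((s == i) : nat)%:Z.
Proof.
rewrite /WT !mnm1E !eq_rshift eq_rlshift.
rewrite big1 ?add0r ?sub0r // => h _; rewrite mnm1E eq_rlshift mul0r //.
Qed.

Lemma WT0 i : WT 0%MM i = 0.
Proof.
rewrite /WT !mnm0E addrK big1 // => h _; rewrite mnm0E mul0r //.
Qed.

Lemma IG_binom g : IG g -> exists a b, g = 'X_[a] - 'X_[b] /\ forall i, WT a i = WT b i.
Proof.
case=> [[h ->]|[i ->]].
  exists U_(lshift (n+n) h)%MM, (U_(rshift m (rshift n (src h))) + U_(rshift m (lshift n (tgt h))))%MM.
  split; first by rewrite mpolyXD.
  by move=> i; rewrite WTD WT_e WT_v WT_z /ewt addrC.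
exists (U_(rshift m (rshift n i)) + U_(rshift m (lshift n i)))%MM, 0%MM.
split; first by rewrite mpolyXD mpolyX0.
by move=> j; rewrite WTD WT_v WT_z WT0 addNr.
Qed.

Lemma Lc_ideal c q : in_ideal_gen IG q -> Lc src tgt c q = 0.
Proof.
case=> k [a [g [Sg ->]]]; rewrite Lc_sum big1 // => i _.
have [x [y [-> Hxy]]] := IG_binom (Sg i).
exact: Lc_binom.
Qed.

Definition liftm (a : 'X_{1..m}) : 'X_{1..NV} := (\sum_(h < m) U_(lshift (n+n) h) *+ a h)%MM.

Lemma liftm_l a h0 : liftm a (lshift (n+n) h0) = a h0.
Proof.
rewrite /liftm mnm_sumE (bigD1 h0) //= mulmnE mnm1E eqxx mul1n big1 ?addn0 //.
by move=> h nh; rewrite mulmnE mnm1E eq_lshift (negbTE nh).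
Qed.

Lemma liftm_r a j : liftm a (rshift m j) = 0%N.
Proof.
by rewrite /liftm mnm_sumE big1 // => h _; rewrite mulmnE mnm1E eq_lrshift.
Qed.

Lemma WT_liftm a i : WT (liftm a) i = wt a i.
Proof.
rewrite /WT !liftm_r addrK /wt; apply: eq_bigr => h _.
by rewrite liftm_l.
Qed.

Lemma mmap1_evar a : mmap1 (@evar K n m) a = 'X_[liftm a].
Proof.
rewrite /mmap1 /liftm.
rewrite (big_morph (fun mu : 'X_{1..NV} => @mpolyX _ K mu) (@mpolyXD _ _) (@mpolyX0 _ _)).
by apply: eq_bigr => h _; rewrite mpolyXn.
Qed.

Lemma Lc_embedE c p :
  Lc src tgt c (embedE p) = \sum_(a <- msupp p | [forall i, wt a i == c i]) p@_a.
Proof.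
rewrite /embedE /mmap Lc_sum [RHS]big_mkcond /=; apply: eq_bigr => a _.
rewrite mmap1_evar mul_mpolyC LcZ LcX /Pc.
rewrite (eq_forallb (P2 := fun i => wt a i == c i)); last by move=> i; rewrite WT_liftm.
by case: ifP; rewrite ?mulr1 ?mulr0.
Qed.

Lemma fiber_zero (p : {mpoly K[m]}) : in_IE src tgt p ->
  forall c, \sum_(a <- msupp p | [forall i, wt a i == c i]) p@_a = 0.
Proof. by move=> H c; rewrite -Lc_embedE; apply: Lc_ideal. Qed.

End Weight2.


Section Fiber.
Variables (K : fieldType) (n m : nat) (src tgt : 'I_m -> 'I_n).
Variable (S : {mpoly K[m]} -> Prop).
Local Notation wt := (wt src tgt).

Lemma fiber_to_ideal :
  (forall a b, (forall i, wt a i = wt b i) -> in_ideal_gen S ('X_[a] - 'X_[b])) ->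
  forall p : {mpoly K[m]},
  (forall c, \sum_(a <- msupp p | [forall i, wt a i == c i]) p@_a = 0) ->
  in_ideal_gen S p.
Proof.
move=> HB p Hf.
set s := msupp p.
pose Q a a' := [forall i, wt a' i == wt a i].
pose R a := nth a s (find (Q a) s).
have R1 : forall a, forall i, wt (R a) i = wt a i.
  move=> a i; rewrite /R; case: (boolP (has (Q a) s)) => [hs|nhs].
    by have /forallP /(_ i) /eqP := nth_find a hs.
  by rewrite nth_default // leqNgt -has_find.
have Rin : forall a, a \in s -> R a \in s.
  move=> a ain; rewrite /R mem_nth // -has_find; apply/hasP; exists a => //.
  by apply/forallP => i.
have R2 : forall a a', a \in s -> a' \in s -> (forall i, wt a i = wt a' i) -> R a = R a'.
  move=> a a' ain ain' E.
  have eQ : Q a =1 Q a' by move=> x; apply: eq_forallb => i; rewrite E.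
  have hs : has (Q a) s by apply/hasP; exists a => //; apply/forallP.
  rewrite /R (eq_find eQ); apply: set_nth_default.
  by rewrite -has_find -(eq_has eQ).
rewrite (mpolyE p) -/s.
have -> : \sum_(a <- s) p@_a *: 'X_[a] =
    \sum_(a <- s) p@_a *: ('X_[a] - 'X_[R a]) + \sum_(a <- s) p@_a *: 'X_[R a].
  by rewrite -big_split /=; apply: eq_bigr => a _; rewrite scalerBr subrK.
have -> : \sum_(a <- s) p@_a *: 'X_[R a] = 0.
  apply/mpolyP => mu; rewrite mcoeff0 raddf_sum /=.
  under eq_bigr do rewrite mcoeffZ mcoeffX mulr_natr mulrb.
  rewrite -big_mkcond /=.
  case: (boolP (has (fun a => R a == mu) s)) => [/hasP [a1 a1in /eqP Ra1] | /hasPn nh]; last first.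
    by apply: big1_seq => a /andP [Ra ain]; move: (nh a ain); rewrite Ra.
  rewrite -[RHS](Hf (wt mu)) /=.
  rewrite [LHS]big_seq_cond [RHS]big_seq_cond.
  apply: eq_bigl => a; case: (boolP (a \in s)) => //= ain.
  apply/eqP/forallP => [Ra i | E].
    by rewrite -Ra R1.
  rewrite -Ra1; apply: R2 => // i; by have := E i; rewrite -Ra1 R1 => /eqP.
rewrite addr0; apply: ideal_sum => a _.
by rewrite -mul_mpolyC; apply: idealM; apply: HB => i; rewrite R1.
Qed.
End Fiber.


Section Cycle.
Variables (n m : nat) (src tgt : 'I_m -> 'I_n).
Hypothesis simp : simple_orientation src tgt.
Variables (a b : 'X_{1..m}).
Hypothesis Hw : forall i, wt src tgt a i = wt src tgt b i.
Hypothesis Hdisj : forall h, (a h == 0%N) || (b h == 0%N).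
Variable h0 : 'I_m.
Hypothesis Hh0 : (0 < a h0)%N || (0 < b h0)%N.

Definition Pa x h := ((src h == x) && (0 < a h)%N) || ((tgt h == x) && (0 < b h)%N).
Definition Ed x := odflt h0 [pick h | Pa x h].
Definition succ x := if src (Ed x) == x then tgt (Ed x) else src (Ed x).
Definition active x := [exists h, Pa x h].

Lemma loopfree h : src h != tgt h.
Proof. by case: simp. Qed.

Lemma A1 x : active x -> Pa x (Ed x).
Proof.
rewrite /Ed; case: pickP => [h Ph|none] //=.
by move/existsP => [h Ph]; rewrite none in Ph.
Qed.

Lemma A4 x : active x -> src (Ed x) == x -> (0 < a (Ed x))%N /\ succ x = tgt (Ed x).
Proof.
move=> /A1; rewrite /Pa /succ => P /[dup] sx ->; split => //.
case/orP: P => /andP [t p] //.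
by move: (loopfree (Ed x)); rewrite (eqP sx) (eqP t) eqxx.
Qed.

Lemma A5 x : active x -> src (Ed x) != x ->
  [/\ (0 < b (Ed x))%N, tgt (Ed x) = x & succ x = src (Ed x)].
Proof.
move=> /A1; rewrite /Pa /succ => P /[dup] sx /negbTE ->.
case/orP: P => /andP [t p]; first by rewrite t in sx.
by rewrite (eqP t).
Qed.

Lemma A2 x : active x -> succ x != x.
Proof.
move=> ax; case: (boolP (src (Ed x) == x)) => sx.
  have [_ ->] := A4 ax sx; apply/eqP => t.
  by move: (loopfree (Ed x)); rewrite (eqP sx) t eqxx.
by have [_ _ ->] := A5 ax sx.
Qed.

Lemma A6 x y : active x -> active y -> Ed x = Ed y -> x = y.
Proof.
move=> ax ay E.
have := Hdisj (Ed x); rewrite !eqn0Ngt.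
case: (boolP (src (Ed x) == x)) => sx.
  have [ap _] := A4 ax sx; rewrite ap /=.
  case: (boolP (src (Ed y) == y)) => sy; first by rewrite -(eqP sx) -(eqP sy) E.
  by have [bp _ _] := A5 ay sy; rewrite E bp.
have [bp tx _] := A5 ax sx; rewrite bp orbF.
case: (boolP (src (Ed y) == y)) => sy.
  by have [ap _] := A4 ay sy; rewrite E ap.
by have [_ ty _] := A5 ay sy; rewrite -tx -ty E.
Qed.

Lemma A7 x : active x -> [set src (Ed x); tgt (Ed x)] = [set x; succ x].
Proof.
move=> ax; case: (boolP (src (Ed x) == x)) => sx.
  by have [_ ->] := A4 ax sx; rewrite (eqP sx).
by have [_ -> ->] := A5 ax sx; rewrite setUC.
Qed.

Lemma balance y : (exists h, ((tgt h == y) && (0 < a h)%N) || ((src h == y) && (0 < b h)%N)) ->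
  active y.
Proof.
move=> [h0' H0].
pose In := (\sum_(h < m) ((tgt h == y) * a h + (src h == y) * b h))%N.
pose Out := (\sum_(h < m) ((src h == y) * a h + (tgt h == y) * b h))%N.
have E1 : (In%:Z - Out%:Z = wt src tgt a y - wt src tgt b y)%R.
  rewrite /In /Out /wt !(big_morph Posz PoszD (erefl (Posz 0))) -!sumrB.
  apply: eq_bigr => h _; rewrite /ewt !PoszD !PoszM; ring.
have IO : In = Out.
  by apply/eqP; rewrite -eqz_nat -subr_eq0 E1 Hw subrr.
have Inp : (0 < In)%N.
  rewrite /In (bigD1 h0') //= !addn_gt0 !muln_gt0 !lt0b.
  by case/orP: H0 => /andP [-> ->]; rewrite ?orbT.
apply/existsP; move: Inp; rewrite IO lt0n sum_nat_eq0 => /forallPn [h].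
rewrite /= -lt0n addn_gt0 !muln_gt0 !lt0b => P; exists h; rewrite /Pa.
by case/orP: P => /andP [-> ->]; rewrite ?orbT.
Qed.

Lemma A3 x : active x -> active (succ x).
Proof.
move=> ax; apply: balance; exists (Ed x).
case: (boolP (src (Ed x) == x)) => sx.
  by have [ap ->] := A4 ax sx; rewrite eqxx ap.
by have [bp _ ->] := A5 ax sx; rewrite eqxx bp orbT.
Qed.

Definition fwdp (vs : seq 'I_n) (hs : seq 'I_m) (x0 : 'I_n) k :=
  (src (nth h0 hs k) == nth x0 vs k) && (tgt (nth h0 hs k) == nth x0 vs (k.+1 %% size vs)).

Lemma cycle_exists : exists (vs : seq 'I_n) (hs : seq 'I_m) (x0 : 'I_n),
  [/\ is_cycle src tgt vs hs,
   (forall k, (k < size hs)%N -> fwdp vs hs x0 k -> (0 < a (nth h0 hs k))%N) &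
   (forall k, (k < size hs)%N -> ~~ fwdp vs hs x0 k -> (0 < b (nth h0 hs k))%N)].
Proof.
pose x0 := if (0 < a h0)%N then src h0 else tgt h0.
have ax0 : active x0.
  apply/existsP; exists h0; rewrite /Pa /x0.
  case: ifP => ap; first by rewrite eqxx.
  by move: Hh0; rewrite ap /= => bp; rewrite eqxx bp orbT.
have act : forall k, active (iter k succ x0).
  by elim=> [|k IH] //=; apply: A3.
pose N := order succ x0; pose o := orbit succ x0.
have so : size o = N by apply: size_orbit.
have uo : uniq o by apply: orbit_uniq.
have no : forall k, (k < N)%N -> nth x0 o k = iter k succ x0.
  by move=> k kN; rewrite /o /orbit nth_traject.
have lp : iter N succ x0 \in o by apply: looping_order.
pose j := index (iter N succ x0) o.
have jN : (j < N)%N by rewrite -so index_mem.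
have ij : iter j succ x0 = iter N succ x0 by rewrite -no // nth_index.
pose vs := drop j o.
have sv : size vs = (N - j)%N by rewrite size_drop so.
set L := size vs in sv.
have L0 : (0 < L)%N by rewrite sv subn_gt0.
have nv : forall k, (k < L)%N -> nth x0 vs k = iter (j + k) succ x0.
  by move=> k kL; rewrite nth_drop no // -ltn_subRL -sv.
have actv : forall k, (k < L)%N -> active (nth x0 vs k).
  by move=> k kL; rewrite nv.
have cyc : forall k, (k < L)%N -> nth x0 vs (k.+1 %% L) = succ (nth x0 vs k).
  move=> k kL; rewrite (nv k kL) -iterS -addnS.
  case: (ltngtP k.+1 L) => [k1L | k1L | k1L].
  - by rewrite modn_small // nv.
  - by rewrite ltnNge kL in k1L.
  rewrite k1L modnn nv // addn0 ij; congr iter.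
  by rewrite sv subnKC // ltnW.
have actin : forall x, x \in vs -> active x.
  by move=> x xin; rewrite -(nth_index x0 xin); apply: actv; rewrite index_mem.
pose hs := map Ed vs.
have sh : size hs = L by rewrite size_map.
have nh : forall k, (k < L)%N -> nth h0 hs k = Ed (nth x0 vs k).
  by move=> k kL; rewrite (nth_map x0).
have uv : uniq vs by apply: drop_uniq.
have L3 : (3 <= L)%N.
  case: (ltnP 2 L) => // L2.
  have H12 : forall l, (0 < l)%N -> (l <= 2)%N -> (l == 1%N) || (l == 2%N) by case=> [|[|[|]]].
  move: (H12 L L0 L2).
  case/orP => /eqP L12.
    have := cyc 0%N L0; rewrite L12 modnn => E0.
    by have := A2 (actv 0%N L0); rewrite -E0 eqxx.
  have L1 : (1 < L)%N by rewrite L12.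
  have c0 := cyc 0%N L0; have c1 := cyc 1%N L1.
  rewrite L12 in c0 c1; rewrite modn_small // in c0; rewrite modnn in c1.
  have s0 := A7 (actv 0%N L0); have s1 := A7 (actv 1%N L1).
  rewrite -c0 in s0; rewrite -c1 [X in _ = X]setUC -s0 in s1.
  have := A6 (actv 0%N L0) (actv 1%N L1) (proj2 simp _ _ (esym s1)).
  by move/eqP; rewrite nth_uniq // L12.
exists vs, hs, x0; split.
- split => //.
  + rewrite map_inj_in_uniq // => x y xin yin; apply: A6; exact: actin.
  + move=> k kL h a' b' <- <- <-.
  rewrite (set_nth_default h0) ?sh // (set_nth_default x0) //.
  rewrite (set_nth_default x0) ?ltn_pmod // nh // cyc //.
  exact: A7 (actv k kL).
- move=> k; rewrite sh => kL; rewrite /fwdp nh //.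
  case: (boolP (src (Ed (nth x0 vs k)) == nth x0 vs k)) => sx.
    by have [ap _] := A4 (actv k kL) sx.
  by [].
- move=> k; rewrite sh => kL; rewrite /fwdp nh //.
  case: (boolP (src (Ed (nth x0 vs k)) == nth x0 vs k)) => sx.
    by have [_ t] := A4 (actv k kL) sx; rewrite -/L cyc // t eqxx.
  by have [bp _ _] := A5 (actv k kL) sx.
Qed.

End Cycle.


Section Main.
Variables (K : fieldType) (n m : nat) (src tgt : 'I_m -> 'I_n).
Hypothesis simp : simple_orientation src tgt.
Local Notation J := (in_ideal_gen (@cycle_binomial K n m src tgt)).
Local Notation wt := (wt src tgt).

Lemma wt0 i : wt 0%MM i = 0.
Proof. by rewrite /wt big1 // => h _; rewrite mnm0E mul0r. Qed.

Lemma wtU h i : wt U_(h)%MM i = ewt src tgt h i.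
Proof. by rewrite /wt; under eq_bigr do rewrite mnm1E; rewrite delta_sumZ. Qed.

Lemma wt_sum (T : Type) (r : seq T) (P : pred T) (F : T -> 'X_{1..m}) i :
  wt (\sum_(x <- r | P x) F x)%MM i = \sum_(x <- r | P x) wt (F x) i.
Proof.
by apply: (big_morph (fun mu => wt mu i) (fun x y => wtD src tgt x y i) (wt0 i)).
Qed.

Lemma X_sum (T : Type) (r : seq T) (P : pred T) (F : T -> 'X_{1..m}) :
  'X_[(\sum_(x <- r | P x) F x)%MM] = \prod_(x <- r | P x) @mpolyX _ K (F x).
Proof.
by apply: (big_morph (fun mu : 'X_{1..m} => @mpolyX _ K mu) (@mpolyXD _ _) (@mpolyX0 _ _)).
Qed.

Lemma cycle_parts vs hs x0 h0 (a b : 'X_{1..m}) :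
  is_cycle src tgt vs hs ->
  (forall k, (k < size hs)%N -> fwdp src tgt h0 vs hs x0 k -> (0 < a (nth h0 hs k))%N) ->
  (forall k, (k < size hs)%N -> ~~ fwdp src tgt h0 vs hs x0 k -> (0 < b (nth h0 hs k))%N) ->
  exists F B, [/\ fC K src tgt vs hs h0 x0 = 'X_[F] - 'X_[B], (F <= a)%MM, (B <= b)%MM,
    (0 < mdeg F + mdeg B)%N & forall i, wt F i = wt B i].
Proof.
move=> Hc Ha Hb; have [L3 Hsz _ uh Hadj] := Hc.
set L := size hs in Ha Hb *.
pose fw k := fwdp src tgt h0 vs hs x0 k.
pose F := (\sum_(k < L | fw k) U_(nth h0 hs k))%MM.
pose B := (\sum_(k < L | ~~ fw k) U_(nth h0 hs k))%MM.
have cnt : forall (P : pred 'I_L) h,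
    (\sum_(k < L | P k) ((nth h0 hs k == h) : nat))%N = [exists k, P k && (nth h0 hs k == h)].
  move=> P h; case: existsP => [[k0 /andP [Pk0 /eqP hk0]] | none].
    rewrite (bigD1 k0) //= hk0 eqxx big1 // => k /andP [Pk nk].
    apply/eqP; rewrite eqb0 -hk0 nth_uniq //; exact: nk.
  by rewrite big1 // => k Pk; apply/eqP; rewrite eqb0; apply/negP => E; apply: none; exists k; rewrite Pk E.
have lep : forall (P : pred 'I_L) (c : 'X_{1..m}),
    (forall k : 'I_L, P k -> (0 < c (nth h0 hs k))%N) ->
    ((\sum_(k < L | P k) U_(nth h0 hs k)) <= c)%MM.
  move=> P c Hpc; apply/mnm_lepP => h; rewrite mnm_sumE.
  under eq_bigr do rewrite mnm1E.
  rewrite cnt; case: existsP => [[k /andP [Pk /eqP <-]] | _] //=.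
  exact: Hpc.
exists F, B; split.
- by rewrite /fC !X_sum.
- by apply: lep => k fk; apply: Ha.
- by apply: lep => k fk; apply: Hb.
- rewrite !mdeg_sum.
  under eq_bigr do rewrite mdeg1.
  under [X in (_ < _ + X)%N]eq_bigr do rewrite mdeg1.
  rewrite !sum1_card.
  have cC := cardC [pred k : 'I_L | fw k]; rewrite card_ord in cC.
  rewrite -[X in (_ < X)%N]/(#|[pred k : 'I_L | fw k]| + #|[predC [pred k : 'I_L | fw k]]|)%N.
  rewrite cC /L Hsz.
  by apply: leq_trans L3.
move=> i; rewrite !wt_sum.
under eq_bigr do rewrite wtU.
under [RHS]eq_bigr do rewrite wtU.
pose V (k : 'I_L) := nth x0 vs k.
have VS : forall k : 'I_L, nth x0 vs (k.+1 %% size vs) = V (ordS k).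
  by move=> k; rewrite /V /= -Hsz.
pose g (k : 'I_L) := ((V (ordS k) == i) : nat)%:Z - ((V k == i) : nat)%:Z.
have hf : forall k : 'I_L, fwdp src tgt h0 vs hs x0 k -> ewt src tgt (nth h0 hs k) i = g k.
  by move=> k /andP [/eqP s /eqP t]; rewrite /ewt s t VS.
have hb : forall k : 'I_L, ~~ fwdp src tgt h0 vs hs x0 k -> ewt src tgt (nth h0 hs k) i = - g k.
  move=> k nf.
  have kL : (k < size vs)%N by rewrite -Hsz.
  have adj : [set src (nth h0 hs k); tgt (nth h0 hs k)] = [set V k; V (ordS k)].
    apply: (Hadj k kL) => //.
    - by apply: set_nth_default; rewrite Hsz.
    - by apply: set_nth_default.
    - by rewrite -VS; apply: set_nth_default; rewrite ltn_pmod // (leq_ltn_trans _ kL).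
  have nf' : ~~ ((src (nth h0 hs k) == V k) && (tgt (nth h0 hs k) == V (ordS k))).
    by rewrite -VS.
  have [s t] := pair_swap adj nf'.
  by rewrite /ewt s t /g opprB.
rewrite (eq_bigr _ hf) (eq_bigr _ hb) sumrN.
apply/eqP; rewrite -subr_eq0 opprK.
have -> : \sum_(k < L | fwdp src tgt h0 vs hs x0 k) g k + \sum_(k < L | ~~ fwdp src tgt h0 vs hs x0 k) g k
  = \sum_(k < L) g k by rewrite [RHS](bigID (fun k : 'I_L => fwdp src tgt h0 vs hs x0 k)).
rewrite /g sumrB [X in _ - X](reindex_inj (@ordS_inj L)) /=.
by rewrite subrr.
Qed.

Lemma lemmaB : forall N (a b : 'X_{1..m}), (mdeg a + mdeg b <= N)%N ->
  (forall i, wt a i = wt b i) -> J ('X_[a] - 'X_[b]).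
Proof.
elim=> [|N IH] a b Hd Hw.
  have a0 : a = 0%MM by apply/eqP; rewrite -mdeg_eq0 -leqn0 (leq_trans (leq_addr _ _) Hd).
  have b0 : b = 0%MM by apply/eqP; rewrite -mdeg_eq0 -leqn0 (leq_trans (leq_addl _ _) Hd).
  by rewrite a0 b0 subrr; apply: ideal0.
case: (boolP [exists h, (0 < a h)%N && (0 < b h)%N]) => [/existsP [h /andP [ap bp]] | nsh].
  pose a' := (a - U_(h))%MM; pose b' := (b - U_(h))%MM.
  have ea : a = (a' + U_(h))%MM by rewrite submK // lep1mP -lt0n.
  have eb : b = (b' + U_(h))%MM by rewrite submK // lep1mP -lt0n.
  have Hw' : forall i, wt a' i = wt b' i.
    by move=> i; apply: (@addIr _ (wt U_(h)%MM i)); rewrite -!wtD -ea -eb.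
  have Hd' : (mdeg a' + mdeg b' <= N)%N.
    by move: Hd; rewrite ea eb !mdegD mdeg1; lia.
  rewrite ea eb !mpolyXD -mulrBl mulrC; apply: idealM; exact: IH.
have Hdisj : forall h, (a h == 0%N) || (b h == 0%N).
  move=> h; move/existsPn: nsh => /(_ h); rewrite negb_and -!eqn0Ngt //.
case: (boolP [exists h, (0 < a h)%N || (0 < b h)%N]) => [/existsP [h0 Hh0] | nz]; last first.
  have a0 : a = 0%MM.
    by apply/mnmP => h; move/existsPn: nz => /(_ h); rewrite negb_or -!eqn0Ngt mnm0E => /andP [/eqP -> _].
  have b0 : b = 0%MM.
    by apply/mnmP => h; move/existsPn: nz => /(_ h); rewrite negb_or -!eqn0Ngt mnm0E => /andP [_ /eqP ->].
  by rewrite a0 b0 subrr; apply: ideal0.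
have [vs [hs [x0 [Hc Ha Hb]]]] := cycle_exists simp Hw Hdisj Hh0.
have [F [B [EfC Fa Bb pos wFB]]] := cycle_parts Hc Ha Hb.
have ea : a = ((a - F) + F)%MM by rewrite submK.
have eb : b = ((b - B) + B)%MM by rewrite submK.
have Hw' : forall i, wt (a - F)%MM i = wt (b - B)%MM i.
  move=> i; apply: (@addIr _ (wt F i)); rewrite [X in _ = _ + X]wFB -!wtD -ea -eb; exact: Hw.
have Hd' : (mdeg (a - F) + mdeg (b - B) <= N)%N.
  by move: Hd pos; rewrite {1}ea {1}eb !mdegD; lia.
have -> : 'X_[a] - 'X_[b] =
    'X_[a - F] * fC K src tgt vs hs h0 x0 + 'X_[B] * ('X_[a - F] - 'X_[b - B]).
  rewrite EfC {1}ea {1}eb !mpolyXD; ring.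
apply: idealD; apply: idealM; last exact: IH.
by apply: idealG; exists vs, hs, h0, x0.
Qed.

End Main.

Theorem corollary1' (K : fieldType) (charK0 : [pchar K] =i pred0)
  (n m : nat) (src tgt : 'I_m -> 'I_n) :
  simple_orientation src tgt ->
  forall p : {mpoly K[m]},
    in_IE src tgt p <-> in_ideal_gen (cycle_binomial src tgt) p.
Proof.
move=> simp p; split.
  move=> H; apply: (fiber_to_ideal (src := src) (tgt := tgt)); last exact: fiber_zero.
  by move=> a b Hw; apply: (lemmaB K simp (leqnn _) Hw).
case=> k [a [g [Sg ->]]].
rewrite /in_IE embedE_sum; apply: ideal_sum => i _.
rewrite embedEM; apply: idealM.
have [vs [hs [h0 [a0 [Hc ->]]]]] := Sg i.
exact: dir1.
Qed.

Unset Implicit Arguments.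

Theorem corollary1 (K : fieldType) (charK0 : [pchar K] =i pred0)
  (n m : nat) (src tgt : 'I_m -> 'I_n) :
  simple_orientation src tgt ->
  forall p : {mpoly K[m]},
    in_IE src tgt p <-> in_ideal_gen (cycle_binomial src tgt) p.
Proof. exact: (@corollary1' K charK0 n m src tgt). Qed.
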